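(* Let $m,n$ be positive integers with $m\ge n$. Then there exists a common knowledge distinguishing debate game $B=(A,S,P,C_w,C_l)$ such that $|C_w(s)|\ge m$ and $|C_l(s)|\le n$ for all $s\in S$, but $e^{\mathrm{CKDDG}}_B(M)\ge\frac{2n-m}{2m}$ for every policy $M$.
   Context: Let $\delta$ be a special default action. A CKDDG is a tuple $(A,S,P,C_w,C_l)$ with $A$ finite, $\delta\notin A$, $S$ finite, $P$ a probability mass function on $S$, and $C_w,C_l:S\to\mathcal P(A)$. A policy is $M:\{1,2\}\times(A\cup\{\delta\})^2\to[0,1]$ with $M(1,a_1,a_2)+M(2,a_1,a_2)=1$. For $j\in\{1,2\}$ and $s\in S$, $w^i_M((j,s))$ is the value to agent $i$ of the two-player zero-sum game with payoff matrix $M(i,\cdot,\cdot)$ in which agent $j$ chooses from $C_w(s)\cup\{\delta\}$ and the other agent chooses from $C_l(s)\cup\{\delta\}$. The error is $e^{\mathrm{CKDDG}}_B(M)=\mathbb E_{s\sim P}\left[\frac{w^1_M((2,s))+w^2_M((1,s))}{2}\right]$. *)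

(* Defs.v *)
From mathcomp Require Import all_boot all_order all_algebra.
From mathcomp Require Import boolp classical_sets reals.
Set Implicit Arguments. Unset Strict Implicit. Unset Printing Implicit Defensive.
Import Order.TTheory GRing.Theory Num.Theory.
Local Open Scope ring_scope.
Local Open Scope classical_set_scope.

Inductive agent := Ag1 | Ag2.
Definition other (i : agent) := match i with Ag1 => Ag2 | Ag2 => Ag1 end.

Section CKDDG.
Variables (R : realType) (A S : finType).

Definition act := option A.
Definition delta : act := None.

Definition with_delta (C : {set A}) : {set act} :=
  delta |: [set Some a | a in C].

Definition is_policy (M : agent -> act -> act -> R) : Prop :=
  forall a1 a2, 0 <= M Ag1 a1 a2 /\ 0 <= M Ag2 a1 a2 /\
                M Ag1 a1 a2 + M Ag2 a1 a2 = 1.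

Definition mixed (D : {set act}) (x : act -> R) : Prop :=
  (forall a, 0 <= x a) /\ (forall a, a \notin D -> x a = 0) /\
  \sum_(a in D) x a = 1.

Definition payoff (M : agent -> act -> act -> R) (i : agent)
  (x1 x2 : act -> R) : R :=
  \sum_(a1 : act) \sum_(a2 : act) x1 a1 * x2 a2 * M i a1 a2.

Definition game_value (M : agent -> act -> act -> R) (i : agent)
  (D1 D2 : {set act}) : R :=
  let Di := if i is Ag1 then D1 else D2 in
  let Do := if i is Ag1 then D2 else D1 in
  sup [set v | exists xi, mixed Di xi /\
       v = inf [set u | exists xo, mixed Do xo /\
                u = (if i is Ag1 then payoff M i xi xo
                                 else payoff M i xo xi)]].

(* w^i_M((j,s)): agent j chooses from C_w(s) ∪ {delta}, the other agent
   from C_l(s) ∪ {delta}. *)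
Definition w (Cw Cl : S -> {set A}) (M : agent -> act -> act -> R)
  (i j : agent) (s : S) : R :=
  let Dw := with_delta (Cw s) in
  let Dl := with_delta (Cl s) in
  if j is Ag1 then game_value M i Dw Dl else game_value M i Dl Dw.

Definition is_pmf (P : S -> R) : Prop :=
  (forall s, 0 <= P s) /\ \sum_(s : S) P s = 1.

Definition ckddg_error (P : S -> R) (Cw Cl : S -> {set A})
  (M : agent -> act -> act -> R) : R :=
  \sum_(s : S) P s * ((w Cw Cl M Ag1 Ag2 s + w Cw Cl M Ag2 Ag1 s) / 2).

End CKDDG.

(* Main.v *)
Require Import Defs.
From mathcomp Require Import all_boot all_order all_algebra.
From mathcomp Require Import boolp classical_sets reals.
From mathcomp Require Import ring lra.
Set Implicit Arguments. Unset Strict Implicit.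
Import Order.TTheory GRing.Theory Num.Theory.
Local Open Scope ring_scope.

Section FM.
Variable R : realFieldType.
Variable T : finType.
Definition row := ((T -> R) * R)%type.
Definition zrow : row := (fun _ => 0, 0).
Definition addrow (r1 r2 : row) : row := (fun k => r1.1 k + r2.1 k, r1.2 + r2.2).
Definition sclrow (c : R) (r : row) : row := (fun k => c * r.1 k, c * r.2).
Inductive cone (I : Type) (S : I -> row) : row -> Prop :=
| cone0 : cone S zrow
| coneS i : cone S (S i)
| coneA r1 r2 : cone S r1 -> cone S r2 -> cone S (addrow r1 r2)
| coneZ c r : 0 <= c -> cone S r -> cone S (sclrow c r).
Definition dot (V : {set T}) (c : T -> R) (z : T -> R) := \sum_(k in V) c k * z k.

Lemma dotA V r1 r2 z : dot V (addrow r1 r2).1 z = dot V r1.1 z + dot V r2.1 z.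
Proof. by rewrite /dot -big_split /=; apply: eq_bigr => k _; rewrite mulrDl. Qed.
Lemma dotZ V c r z : dot V (sclrow c r).1 z = c * dot V r.1 z.
Proof. by rewrite /dot mulr_sumr; apply: eq_bigr => k _ /=; rewrite mulrA. Qed.

Lemma ex_lb (Us : seq R) : exists t, forall u, u \in Us -> t <= u.
Proof.
elim: Us => [|u Us [t Ht]]; first by exists 0.
exists (Num.min u t) => x; rewrite inE => /orP [/eqP -> | /Ht]; first by rewrite ge_min lexx.
by move=> h; rewrite ge_min h orbT.
Qed.

Lemma ex_between (Ls Us : seq R) :
  (forall l u, l \in Ls -> u \in Us -> l <= u) ->
  exists t, (forall l, l \in Ls -> l <= t) /\ (forall u, u \in Us -> t <= u).
Proof.
elim: Ls => [|l Ls IH] H.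
  by have [t Ht] := ex_lb Us; exists t; split.
have [|t [H1 H2]] := IH.
  by move=> l' u hl hu; apply: H => //; rewrite inE hl orbT.
exists (Num.max l t); split.
  move=> x; rewrite inE => /orP [/eqP -> | /H1 h]; first by rewrite le_max lexx.
  by rewrite le_max h orbT.
move=> u hu; rewrite ge_max H2 // andbT; apply: H => //; by rewrite inE eqxx.
Qed.

Lemma fm n : forall (I : finType) (S : I -> row) (V : {set T}), #|V| = n ->
  (exists z, forall i, dot V (S i).1 z <= (S i).2) \/
  (exists r, cone S r /\ (forall k, k \in V -> r.1 k = 0) /\ r.2 < 0).
Proof.
elim: n => [|n IH] I S V hV.
  have V0 : V = finset.set0 by apply: cards0_eq.
  case: (pselect (exists i, (S i).2 < 0)) => [[i hi]|hn].
    by right; exists (S i); split; [exact: coneS | split => // k; rewrite V0 inE].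
  left; exists (fun _ => 0) => i; rewrite /dot V0 big_set0 leNgt.
  by apply/negP => h; apply: hn; exists i.
have [v vV] : exists v, v \in V by apply/card_gt0P; rewrite hV.
have hV' : #|V :\ v| = n by move: hV; rewrite (cardsD1 v) vV add1n => -[].
pose S' (j : (I + I * I)%type) : row :=
  match j with
  | inl i => if (S i).1 v == 0 then S i else zrow
  | inr (p, q) => if (0 < (S p).1 v) && ((S q).1 v < 0) then
      addrow (sclrow (- (S q).1 v) (S p)) (sclrow ((S p).1 v) (S q)) else zrow
  end.
case: (IH _ S' _ hV') => [[z' Hz']|[r [cr [r0 r2]]]]; last first.
  have key : forall r, cone S' r -> cone S r /\ r.1 v = 0.
    move=> {cr r0 r2} r; elim => [|j|r1 r2 _ [c1 e1] _ [c2 e2]|c r1 hc _ [c1 e1]].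
    - by split; [exact: cone0|].
    - case: j => [i|[p q]] /=.
        by case: eqP => [e|_]; split => //; [exact: coneS|exact: cone0].
      case: ifP => [/andP [hp hq]|_]; last by split => //; exact: cone0.
      split; last by rewrite /= mulNr mulrC addNr.
      by apply: coneA; apply: coneZ; rewrite ?oppr_ge0 ?ltW //; exact: coneS.
    - by split; [exact: coneA|rewrite /= e1 e2 addr0].
    - by split; [exact: coneZ|rewrite /= e1 mulr0].
  have [cr' rv] := key r cr.
  right; exists r; split => //; split => // k kV.
  case: (eqVneq k v) => [->//|kv]; apply: r0; by rewrite in_setD1 kv.
left.
pose c i := (S i).1 v.
pose d i := dot (V :\ v) (S i).1 z'.
pose b i := (S i).2.
have h0 : forall i, c i = 0 -> d i <= b i.
  move=> i ci; have := Hz' (inl i); rewrite /c in ci; by rewrite /= ci eqxx.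
have h2 : forall p q, 0 < c p -> c q < 0 -> (b q - d q) / c q <= (b p - d p) / c p.
  move=> p q hp hq; have := Hz' (inr (p, q)).
  have -> : S' (inr (p, q)) = addrow (sclrow (- c q) (S p)) (sclrow (c p) (S q)).
    by rewrite /S' -/(c p) -/(c q) hp hq.
  rewrite dotA !dotZ -/(d p) -/(d q) -/(b p) -/(b q) => H.
  rewrite ler_pdivlMr // mulrAC ler_ndivrMr //.
  move: H; rewrite /= -/(b p) -/(b q).
  move: (c p) (c q) (b p) (b q) (d p) (d q) => cp cq bp bq dp dq H.
  rewrite -subr_ge0; rewrite -subr_ge0 in H.
  by apply: le_trans H _; rewrite le_eqVlt; apply/orP; left; apply/eqP; ring.
have hb : forall l u, l \in [seq (b q - d q) / c q | q <- enum I & c q < 0] ->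
   u \in [seq (b p - d p) / c p | p <- enum I & 0 < c p] -> l <= u.
  move=> l u /mapP [q]; rewrite mem_filter => /andP [hq _] -> /mapP [p].
  by rewrite mem_filter => /andP [hp _] ->; apply: h2.
have [t [Ht1 Ht2]] := ex_between hb.
exists (fun k => if k == v then t else z' k) => i.
rewrite /dot (big_setD1 v vV) /= eqxx.
have -> : \sum_(k in V :\ v) (S i).1 k * (if k == v then t else z' k) = d i.
  by apply: eq_bigr => k; rewrite in_setD1 => /andP [/negbTE -> _].
rewrite -/(c i) -/(b i) -lerBrDr.
case: (ltrgtP (c i) 0) => hc.
- have hi : i \in [seq q <- enum I | c q < 0] by rewrite mem_filter hc mem_enum.
  have := Ht1 _ (map_f (fun q => (b q - d q) / c q) hi).
  by rewrite ler_ndivrMr // mulrC.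
- have hi : i \in [seq q <- enum I | 0 < c q] by rewrite mem_filter hc mem_enum.
  have := Ht2 _ (map_f (fun q => (b q - d q) / c q) hi).
  by rewrite ler_pdivlMr // mulrC.
- by rewrite hc mul0r subr_ge0; apply: h0.
Qed.

Lemma sum_setT (F : T -> R) : \sum_(k in [set: T]) F k = \sum_k F k.
Proof. by apply: eq_bigl => k; rewrite inE. Qed.

Lemma sum_pt (a : T) (c : R) (z : T -> R) :
  \sum_k (if k == a then c else 0) * z k = c * z a.
Proof.
rewrite (bigD1 a) //= eqxx big1 ?addr0 // => k /negbTE ->; by rewrite mul0r.
Qed.

Lemma ville (t0 : T) (M : T -> T -> R) (t : R) :
  (exists x, (forall a, 0 <= x a) /\ \sum_a x a = 1 /\
      forall b, t <= \sum_a x a * M a b) \/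
  (exists y, (forall b, 0 <= y b) /\ \sum_b y b = 1 /\
      forall a, \sum_b M a b * y b < t).
Proof.
pose rowsV (j : (T + (bool + T))%type) : row :=
  match j with
  | inl a => ((fun k => if k == a then -1 else 0), 0)
  | inr (inl true) => ((fun _ => 1), 1)
  | inr (inl false) => ((fun _ => -1), -1)
  | inr (inr b) => ((fun a => t - M a b), 0)
  end.
case: (@fm _ _ rowsV [set: T] erefl) => [[z Hz]|[r [cr [r0 r2]]]].
  left; exists z.
  have hz : forall a, 0 <= z a.
    move=> a; have := Hz (inl a); rewrite /= /dot sum_setT sum_pt.
    by move=> h; lra.
  have s1 : \sum_a z a = 1.
    have := Hz (inr (inl true)); have := Hz (inr (inl false)).
    rewrite /= /dot !sum_setT.
    rewrite -!mulr_sumr => h1 h2; apply/eqP; rewrite eq_le; apply/andP; split; lra.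
  split => //; split => // b.
  have := Hz (inr (inr b)); rewrite /= /dot sum_setT => h.
  have e : \sum_k (t - M k b) * z k = t - \sum_a z a * M a b.
    rewrite -[t in RHS]mulr1 -s1 mulr_sumr -sumrB; apply: eq_bigr => k _; ring.
  rewrite e in h; lra.
right.
have key : forall r, cone rowsV r -> exists y, (forall b, 0 <= y b) /\
    forall a, r.1 a <= r.2 + \sum_b y b * (t - M a b).
  move=> {cr r0 r2} r; elim => [|j|r1 r2 _ [y1 [hy1 e1]] _ [y2 [hy2 e2]]|c r1 hc _ [y1 [hy1 e1]]].
  - exists (fun _ => 0); split => // a /=; rewrite big1 ?addr0 // => b _; by rewrite mul0r.
  - case: j => [a|[[]|b]].
    + exists (fun _ => 0); split => // k /=; rewrite big1 ?addr0 => [|b _]; last by rewrite mul0r.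
      by case: eqP => _ //; rewrite lerN10.
    + exists (fun _ => 0); split => // k /=; rewrite big1 ?addr0 // => b _; by rewrite mul0r.
    + exists (fun _ => 0); split => // k /=; rewrite big1 ?addr0 // => b _; by rewrite mul0r.
    + exists (fun k => if k == b then 1 else 0); split; first by move=> k; case: eqP.
      move=> a /=; rewrite add0r.
      by rewrite (sum_pt b 1 (fun k => t - M a k)) mul1r.
  - exists (fun b => y1 b + y2 b); split; first by move=> b; rewrite addr_ge0.
    move=> a /=; under eq_bigr do rewrite mulrDl; rewrite big_split /=.
    rewrite addrACA; exact: lerD.
  - exists (fun b => c * y1 b); split; first by move=> b; rewrite mulr_ge0.
    move=> a /=; under eq_bigr do rewrite -mulrA; rewrite -mulr_sumr -mulrDr.
    exact: ler_wpM2l.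
have [y [hy e]] := key r cr.
have pos : forall a, 0 < \sum_b y b * (t - M a b).
  move=> a; have := e a; rewrite r0 ?inE // => h.
  lra.
pose Y := \sum_b y b.
have hY : 0 < Y.
  rewrite lt_def sumr_ge0 // andbT; apply/negP => /eqP h0.
  have y0 := psumr_eq0P (fun b _ => hy b) h0.
  have := pos t0; rewrite big1 ?ltxx // => b _; by rewrite y0 // mul0r.
exists (fun b => y b / Y); split; first by move=> b; rewrite divr_ge0 // ltW.
split; first by rewrite -mulr_suml mulfV // gt_eqF.
move=> a; have := pos a.
under eq_bigr do rewrite mulrBr.
rewrite sumrB -mulr_suml -/Y subr_gt0 => h.
rewrite (eq_bigr (fun b => (M a b * y b) / Y)); last by move=> b _; rewrite mulrA.
rewrite -mulr_suml ltr_pdivrMr // mulrC (eq_bigr (fun i => y i * M a i)) // => b _; exact: mulrC.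
Qed.
End FM.

Section Games.
Variable R : realType.
Variable A : finType.
Local Notation T := (act A).
Local Notation dl := (delta A).

Lemma mixed_sum (D : {set T}) (x : T -> R) : mixed D x -> \sum_a x a = 1.
Proof.
move=> [h0 [hout hs]]; rewrite -hs [in RHS]big_mkcond; apply: eq_bigr => a _.
by case: ifP => // /negbT /hout.
Qed.

Definition pm : T -> R := fun a => if a == dl then 1 else 0.

Lemma pm_mixed (D : {set T}) : dl \in D -> mixed D pm.
Proof.
move=> hd; split; first by move=> a; rewrite /pm; case: eqP.
split; first by move=> a ha; rewrite /pm; case: eqP => // e; rewrite e hd in ha.
rewrite (bigD1 dl) //= /pm eqxx big1 ?addr0 // => a /andP [_ /negbTE ->] //.
Qed.

Lemma payoffE1 (M : agent -> T -> T -> R) i x y :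
  payoff M i (x : T -> R) y = \sum_b y b * \sum_a x a * M i a b.
Proof.
rewrite /payoff exchange_big; apply: eq_bigr => b _; rewrite mulr_sumr.
by apply: eq_bigr => a _; rewrite mulrA [y b * _]mulrC.
Qed.

Lemma payoffE2 (M : agent -> T -> T -> R) i x y :
  payoff M i (x : T -> R) y = \sum_a x a * \sum_b y b * M i a b.
Proof.
rewrite /payoff; apply: eq_bigr => a _; rewrite mulr_sumr.
by apply: eq_bigr => b _; rewrite !mulrA.
Qed.

Lemma avg_lb (x g : T -> R) c : (forall a, 0 <= x a) -> \sum_a x a = 1 ->
  (forall a, c <= g a) -> c <= \sum_a x a * g a.
Proof.
move=> h0 h1 hg; rewrite -[c]mul1r -h1 mulr_suml; apply: ler_sum => a _.
by apply: ler_wpM2l.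
Qed.

Lemma avg_ub (x g : T -> R) c : (forall a, 0 <= x a) -> \sum_a x a = 1 ->
  (forall a, g a <= c) -> \sum_a x a * g a <= c.
Proof.
move=> h0 h1 hg; rewrite -[c]mul1r -h1 mulr_suml; apply: ler_sum => a _.
by apply: ler_wpM2l.
Qed.

Lemma payoff01 (M : agent -> T -> T -> R) i D1 D2 (x y : T -> R) :
  (forall a b, 0 <= M i a b <= 1) -> mixed D1 x -> mixed D2 y ->
  0 <= payoff M i x y <= 1.
Proof.
move=> hM hx hy; have sx := mixed_sum hx; have sy := mixed_sum hy.
have [x0 _] := hx; have [y0 _] := hy.
rewrite payoffE2; apply/andP; split.
  apply: avg_lb => // a; apply: avg_lb => // b; by case/andP: (hM a b).
apply: avg_ub => // a; apply: avg_ub => // b; by case/andP: (hM a b).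
Qed.

Lemma gv_aux (E : (T -> R) -> set R) (D : {set T}) (x : T -> R) c :
  mixed D x -> (E x !=set0)%classic -> (forall u, E x u -> c <= u) ->
  (forall x', mixed D x' -> exists2 u, E x' u & u <= 1) ->
  (forall x' u, mixed D x' -> E x' u -> 0 <= u) ->
  c <= sup [set v | exists xi, mixed D xi /\ v = inf (E xi)]%classic.
Proof.
move=> hx ne lb ub pos.
apply: (@le_trans _ _ (inf (E x))); first exact: lb_le_inf.
apply: sup_upper_bound; last by exists x.
split; first by exists (inf (E x)); exists x.
exists 1 => v [xi [hxi ->]].
have [u Eu u1] := ub xi hxi.
apply: le_trans u1; apply: ge_inf => //.
by exists 0 => u' Eu'; exact: pos _ _ hxi Eu'.
Qed.

Lemma gv1_lb (M : agent -> T -> T -> R) (D1 D2 : {set T}) (x : T -> R) (c : R) :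
  (forall i a b, 0 <= M i a b <= 1) -> dl \in D2 -> mixed D1 x ->
  (forall y, mixed D2 y -> c <= payoff M Ag1 x y) -> c <= game_value M Ag1 D1 D2.
Proof.
move=> hM hd hx hc; rewrite /game_value /=.
apply: (gv_aux (E := fun xi => [set u | exists xo, mixed D2 xo /\ u = payoff M Ag1 xi xo]%classic) hx).
- by exists (payoff M Ag1 x pm); exists pm; split => //; exact: pm_mixed.
- by move=> u [y [hy ->]]; exact: hc.
- move=> x' hx'; exists (payoff M Ag1 x' pm); first by exists pm; split => //; exact: pm_mixed.
  by case/andP: (payoff01 (hM Ag1) hx' (pm_mixed hd)).
- by move=> x' u hx' [y [hy ->]]; case/andP: (payoff01 (hM Ag1) hx' hy).
Qed.

Lemma gv2_lb (M : agent -> T -> T -> R) (D1 D2 : {set T}) (y : T -> R) (c : R) :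
  (forall i a b, 0 <= M i a b <= 1) -> dl \in D1 -> mixed D2 y ->
  (forall x, mixed D1 x -> c <= payoff M Ag2 x y) -> c <= game_value M Ag2 D1 D2.
Proof.
move=> hM hd hy hc; rewrite /game_value /=.
apply: (gv_aux (E := fun xi => [set u | exists xo, mixed D1 xo /\ u = payoff M Ag2 xo xi]%classic) hy).
- by exists (payoff M Ag2 pm y); exists pm; split => //; exact: pm_mixed.
- by move=> u [x [hx ->]]; exact: hc.
- move=> y' hy'; exists (payoff M Ag2 pm y'); first by exists pm; split => //; exact: pm_mixed.
  by case/andP: (payoff01 (hM Ag2) (pm_mixed hd) hy').
- by move=> y' u hy' [x [hx ->]]; case/andP: (payoff01 (hM Ag2) hx hy').
Qed.

Definition restr (L : {set T}) (x : T -> R) : T -> R := fun a =>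
  (if a \in L then x a else 0) + (if a == dl then \sum_(b | b \notin L) x b else 0).

Lemma restr_mixed (L : {set T}) (x : T -> R) : dl \in L -> (forall a, 0 <= x a) -> \sum_a x a = 1 ->
  mixed L (restr L x).
Proof.
move=> hd h0 h1; split.
  move=> a; rewrite /restr addr_ge0 //; first by case: ifP.
  by case: ifP => // _; rewrite sumr_ge0.
split.
  move=> a ha; rewrite /restr (negbTE ha); case: eqP => [e|_]; last by rewrite addr0.
  by rewrite e hd in ha.
rewrite big_split /= -h1 [in RHS](bigID (fun a => a \in L)) /=; congr (_ + _).
  by apply: eq_bigr => a ->.
rewrite (bigD1 dl) //= [X in _ + X = _]big1 ?addr0 // => a /andP [_ /negbTE ->]. by [].
Qed.

Lemma restr_lb (L : {set T}) (x f : T -> R) : (forall a, 0 <= x a) -> (forall a, 0 <= f a <= 1) ->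
  \sum_a x a * f a - \sum_(b | b \notin L) x b <= \sum_a restr L x a * f a.
Proof.
move=> h0 hf.
have e1 : \sum_a x a * f a = \sum_(a | a \in L) x a * f a + \sum_(a | a \notin L) x a * f a.
  by rewrite (bigID (fun a => a \in L)).
have e2 : \sum_a restr L x a * f a = \sum_(a | a \in L) x a * f a +
    \sum_a (if a == dl then \sum_(b | b \notin L) x b else 0) * f a.
  rewrite /restr; under eq_bigr do rewrite mulrDl; rewrite big_split /=; congr (_ + _).
  rewrite [RHS]big_mkcond; apply: eq_bigr => a _; by case: ifP; rewrite ?mul0r.
have h3 : 0 <= \sum_a (if a == dl then \sum_(b | b \notin L) x b else 0) * f a.
  apply: sumr_ge0 => a _; case: ifP => _; rewrite ?mul0r //.
  by apply: mulr_ge0; [apply: sumr_ge0 | case/andP: (hf a)].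
have h4 : \sum_(a | a \notin L) x a * f a <= \sum_(b | b \notin L) x b.
  apply: ler_sum => a _; rewrite -[X in _ <= X]mulr1; apply: ler_wpM2l => //.
  by case/andP: (hf a).
rewrite e1 e2; lra.
Qed.

Lemma wdE (C : {set A}) : with_delta C = (None : option A) |: [set Some a | a in C].
Proof. by []. Qed.

Lemma sum_with_delta (C : {set A}) (f : T -> R) :
  \sum_(a in with_delta C) f a = f dl + \sum_(a in C) f (Some a).
Proof.
rewrite wdE big_setU1 /=; last by apply/negP => /imsetP [a _].
by rewrite big_imset //= => a b _ _ [].
Qed.

Lemma sumT_delta (f : T -> R) : \sum_a f a = f dl + \sum_a f (Some a).
Proof.
have -> : \sum_a f a = \sum_(a in with_delta [set: A]) f a.
  apply: eq_bigl => -[a|]; rewrite wdE !inE //.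
  by symmetry; apply/orP; right; apply/imsetP; exists a; rewrite ?inE.
by rewrite sum_with_delta; congr (_ + _); apply: eq_bigl => a; rewrite inE.
Qed.
End Games.

Section Minimax.
Variable R : realType.
Variable U : finType.

Lemma approx_minimax (u0 : U) (N : U -> U -> R) (eps : R) :
  (forall a b, 0 <= N a b <= 1) -> 0 < eps ->
  exists x y V, ((forall a, 0 <= x a) /\ \sum_a x a = 1) /\
    ((forall b, 0 <= y b) /\ \sum_b y b = 1) /\
    (forall b, V - eps <= \sum_a x a * N a b) /\
    (forall a, \sum_b y b * N a b <= V + eps).
Proof.
move=> hN he.
pose Vs := [set t | exists x : U -> R, ((forall a, 0 <= x a) /\ \sum_a x a = 1) /\
   forall b, t <= \sum_a x a * N a b]%classic.
pose p0 : U -> R := fun a => if a == u0 then 1 else 0.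
have hp0 : (forall a, 0 <= p0 a) /\ \sum_a p0 a = 1.
  split; first by move=> a; rewrite /p0; case: eqP.
  rewrite (bigD1 u0) //= /p0 eqxx big1 ?addr0 // => a /negbTE ->.
  by [].
have hs : has_sup Vs.
  split.
    exists 0; exists p0; split => // b; apply: sumr_ge0 => a _.
    by apply: mulr_ge0; [case: hp0 => h _; exact: h| case/andP: (hN a b)].
  exists 1 => t [x [[x0 x1] hx]]; apply: le_trans (hx u0) _.
  rewrite -x1; apply: ler_sum => a _; rewrite -[X in _ <= X]mulr1.
  by apply: ler_wpM2l => //; case/andP: (hN a u0).
have [e [x [hx hxe]] he'] := sup_adherent he hs.
case: (ville u0 N (sup Vs + eps)) => [[x' [x0 [x1 hx']]]|[y [y0 [y1 hy]]]].
  have : sup Vs + eps <= sup Vs by apply: sup_upper_bound => //; exists x'.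
  by rewrite gerDl leNgt he.
exists x, y, (sup Vs); split => //; split => //; split.
  by move=> b; apply: le_trans (hxe b); apply: ltW.
move=> a; apply: ltW; apply: le_lt_trans (hy a); rewrite le_eqVlt; apply/orP; left.
by apply/eqP; apply: eq_bigr => b _; rewrite mulrC.
Qed.
End Minimax.
Theorem theoremE1 (R : realType) (m n : nat) (hn : (0 < n)%N) (hm : (0 < m)%N)
  (hmn : (n <= m)%N) :
  exists (A S : finType) (P : S -> R) (Cw Cl : S -> {set A}),
    is_pmf P /\
    (forall s : S, (m <= #|Cw s|)%N /\ (#|Cl s| <= n)%N) /\
    (forall M : agent -> act A -> act A -> R, is_policy M ->
       (2 * n%:R - m%:R) / (2 * m%:R) <= ckddg_error P Cw Cl M).
Proof.
case: m hm hmn => [//|m'] _ hmn.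
pose win (i : 'I_n) : 'I_m'.+1 := widen_ord hmn i.
pose Cl (s : 'I_m'.+1) : {set 'I_m'.+1} := (fun i => s + win i) @: [set: 'I_n].
have hinj : forall s, {in [set: 'I_n] &, injective (fun i => s + win i)}.
  move=> s i j _ _ /addrI /(congr1 val) /= e; exact: val_inj.
have hm0 : (0 : R) < (m'.+1)%:R by rewrite ltr0n.
exists 'I_m'.+1, 'I_m'.+1, (fun _ => (m'.+1)%:R^-1), (fun _ => [set: 'I_m'.+1]), Cl.
split.
  split; first by move=> s; rewrite invr_ge0 ltW.
  by rewrite sumr_const card_ord -(mulr_natr ((m'.+1)%:R^-1)) mulVf // gt_eqF.
split.
  move=> s; split; first by rewrite cardsT card_ord.
  by rewrite /Cl; apply: leq_trans (leq_imset_card _ _) _; rewrite cardsT card_ord.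
move=> M hM.
have hM01 : forall i a b, 0 <= M i a b <= 1.
  move=> [] a b; have [h1 [h2 h3]] := hM a b; apply/andP; split => //; lra.
have M2E : forall a b, M Ag2 a b = 1 - M Ag1 a b.
  by move=> a b; have [h1 [h2 h3]] := hM a b; lra.
have dW : forall C : {set 'I_m'.+1}, delta _ \in with_delta C.
  by move=> C; rewrite wdE !inE eqxx.
have hout : forall z : act 'I_m'.+1 -> R, (forall a, 0 <= z a) -> \sum_a z a = 1 ->
    \sum_s \sum_(b | b \notin with_delta (Cl s)) z b <= (m'.+1)%:R - n%:R.
  move=> z z0 z1.
  have e1 : forall s, \sum_(b | b \notin with_delta (Cl s)) z b =
      1 - (z (delta _) + \sum_(i : 'I_n) z (Some (s + win i))).
    move=> s; have h := z1; rewrite (bigID (fun b => b \in with_delta (Cl s))) /= in h.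
    rewrite sum_with_delta big_imset // in h.
    have -> : \sum_(i : 'I_n) z (Some (s + win i)) = \sum_(i in [set: 'I_n]) z (Some (s + win i)).
      by apply: eq_bigl => i; rewrite inE.
    lra.
  under eq_bigr do rewrite e1.
  rewrite sumrB sumr_const card_ord.
  have e2 : \sum_s (z (delta _) + \sum_(i : 'I_n) z (Some (s + win i))) =
      z (delta _) *+ m'.+1 + n%:R * (1 - z (delta _)).
    rewrite big_split /= sumr_const card_ord exchange_big /=; congr (_ + _).
    have e3 : forall i : 'I_n, \sum_(s : 'I_m'.+1) z (Some (s + win i)) = 1 - z (delta _).
      move=> i; have h := sumT_delta z; rewrite z1 in h.
      have -> : \sum_(s : 'I_m'.+1) z (Some (s + win i)) = \sum_a z (Some a).
        by symmetry; exact: (reindex_inj (addIr (win i))).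
      lra.
    by under eq_bigr do rewrite e3; rewrite sumr_const card_ord mulr_natl.
  rewrite e2 -(mulr_natl (z (delta _))).
  have hz := z0 (delta _).
  have hnm : (n%:R : R) <= (m'.+1)%:R by rewrite ler_nat.
  have hmn' : (0 : R) <= (m'.+1)%:R - n%:R by rewrite subr_ge0.
  have := mulr_ge0 hmn' hz.
  lra.
apply/ler_addgt0Pr => e he.
have [x [y [V [[x0 x1] [[y0 y1] [hx hy]]]]]] :=
  approx_minimax (delta _) (fun a b => hM01 Ag1 a b) he.
pose ox s := \sum_(b | b \notin with_delta (Cl s)) x b.
pose oy s := \sum_(b | b \notin with_delta (Cl s)) y b.
have hw1 : forall s, V - e - ox s <= w (fun=> [set: 'I_m'.+1]) Cl M Ag1 Ag2 s.
  move=> s; rewrite /w /=.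
  apply: (gv1_lb (x := restr (with_delta (Cl s)) x)) => //.
  - exact: restr_mixed.
  - move=> yo hyo; rewrite payoffE1; apply: avg_lb; [by case: hyo | exact: mixed_sum hyo | move=> b].
    apply: le_trans (restr_lb _ x0 (fun a => hM01 Ag1 a b)).
    by rewrite lerD2r; exact: hx.
have hw2 : forall s, 1 - V - e - oy s <= w (fun=> [set: 'I_m'.+1]) Cl M Ag2 Ag1 s.
  move=> s; rewrite /w /=.
  apply: (gv2_lb (y := restr (with_delta (Cl s)) y)) => //.
  - exact: restr_mixed.
  - move=> xo hxo; rewrite payoffE2; apply: avg_lb; [by case: hxo | exact: mixed_sum hxo | move=> a].
    apply: le_trans (restr_lb _ y0 (fun b => hM01 Ag2 a b)).
    rewrite lerD2r.
    have -> : \sum_b y b * M Ag2 a b = 1 - \sum_b y b * M Ag1 a b.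
      rewrite -[in RHS]y1 -sumrB; apply: eq_bigr => b _; rewrite M2E; ring.
    have := hy a; lra.
rewrite /ckddg_error.
have step : \sum_s (m'.+1)%:R^-1 * ((1 - 2 * e - ox s - oy s) / 2) <=
    \sum_s (m'.+1)%:R^-1 * ((w (fun=> [set: 'I_m'.+1]) Cl M Ag1 Ag2 s +
                             w (fun=> [set: 'I_m'.+1]) Cl M Ag2 Ag1 s) / 2).
  apply: ler_sum => s _; apply: ler_wpM2l; first by rewrite invr_ge0 ltW.
  apply: ler_wpM2r; first by rewrite invr_ge0.
  have := hw1 s; have := hw2 s; lra.
apply: le_trans (lerD step (lexx e)).
have hX : \sum_s ox s <= (m'.+1)%:R - n%:R := hout x x0 x1.
have hY : \sum_s oy s <= (m'.+1)%:R - n%:R := hout y y0 y1.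
rewrite -mulr_sumr -mulr_suml !sumrB sumr_const card_ord sumr_const card_ord.
move: hX hY; set SX := \sum_s ox s; set SY := \sum_s oy s => hX hY.
have hmz : (m'.+1)%:R != 0 :> R by rewrite gt_eqF.
have -> : (m'.+1)%:R^-1 * (((m'.+1)%:R - (2 * e) *+ m'.+1 - SX - SY) / 2) + e =
   1 / 2 - (m'.+1)%:R^-1 * (SX + SY) / 2.
  rewrite -(mulr_natl (2 * e)); field; by rewrite nat1r pnatr_eq0.
rewrite [X in X <= _](_ : _ = n%:R * (m'.+1)%:R^-1 - 1 / 2); last first.
  by field; rewrite nat1r pnatr_eq0.
have him : (m'.+1)%:R^-1 * (m'.+1)%:R = 1 :> R by rewrite mulVf.
have hi0 : (0 : R) <= (m'.+1)%:R^-1 by rewrite invr_ge0 ltW.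
have h1 := ler_wpM2l hi0 hX; have h2 := ler_wpM2l hi0 hY.
rewrite !mulrBr him in h1 h2.
set im := (m'.+1)%:R^-1 in h1 h2 *.
have : im * n%:R = n%:R * im by rewrite mulrC.
lra.
Qed.
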